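(* Let $\mathcal{A}\subseteq\mathbb{R}^3$ be measurable with finite positive measure, $k_0,\eta>0$, and for $k\in\{1,2\}$ let $\mathsf{G}_k\in L^2(\mathcal{A})$ with $\mathsf{g}_k=\int_{\mathcal{A}}|\mathsf{G}_k|^2>0$, $\mathsf{H}_k=\frac{\mathrm{j}k_0\eta}{\sqrt{4\pi}}\mathsf{G}_k$, $A_{\mathsf{u},k}>0$, $\sigma_k>0$, and $\hat{\mathsf{H}}_k=\frac{\sqrt{A_{\mathsf{u},k}}}{\sigma_k}\mathsf{H}_k$. Let $\rho=\frac{\int_{\mathcal{A}}\mathsf{G}_1^*\mathsf{G}_2}{\sqrt{\mathsf{g}_1\mathsf{g}_2}}$. Let $\mathsf{P}>0$ and $\mathsf{P}_1,\mathsf{P}_2\ge0$ with $\mathsf{P}_1+\mathsf{P}_2=\mathsf{P}$, and put $\overline{\gamma}_{\mathsf{dl},k}=\frac{A_{\mathsf{u},k}k_0^2\eta^2}{4\pi\sigma_k^2}\mathsf{P}_k$. Define the source currents $$\mathsf{J}_{\mathsf{dl},1}(\mathbf{r})=\sqrt{\mathsf{P}_1}\,\frac{\hat{\mathsf{H}}_1^*(\mathbf{r})-\frac{\mathsf{P}_2\int_{\mathcal{A}}\hat{\mathsf{H}}_1^*\hat{\mathsf{H}}_2}{1+\mathsf{P}_2\int_{\mathcal{A}}|\hat{\mathsf{H}}_2|^2}\hat{\mathsf{H}}_2^*(\mathbf{r})}{\sqrt{\int_{\mathcal{A}}|\hat{\mathsf{H}}_1|^2-\frac{\mathsf{P}_2|\int_{\mathcal{A}}\hat{\mathsf{H}}_1^*\hat{\mathsf{H}}_2|^2}{1+\mathsf{P}_2\int_{\mathcal{A}}|\hat{\mathsf{H}}_2|^2}}},\qquad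 \mathsf{J}_{\mathsf{dl},2}(\mathbf{r})=\sqrt{\mathsf{P}_2}\,\frac{\hat{\mathsf{H}}_2^*(\mathbf{r})\sqrt{1+|\int_{\mathcal{A}}\hat{\mathsf{H}}_2\mathsf{J}_{\mathsf{dl},1}|^2}}{\sqrt{\int_{\mathcal{A}}|\hat{\mathsf{H}}_2|^2}}.$$ Define the downlink rates under dirty-paper coding with order $2\rightarrow1$: $$\mathsf{R}_{\mathsf{dl},1}^{2\rightarrow1}=\log_2\Big(1+\Big|\int_{\mathcal{A}}\hat{\mathsf{H}}_1\mathsf{J}_{\mathsf{dl},1}\Big|^2\Big),\qquad \mathsf{R}_{\mathsf{dl},2}^{2\rightarrow1}=\log_2\Big(1+\frac{|\int_{\mathcal{A}}\hat{\mathsf{H}}_2\mathsf{J}_{\mathsf{dl},2}|^2}{1+|\int_{\mathcal{A}}\hat{\mathsf{H}}_2\mathsf{J}_{\mathsf{dl},1}|^2}\Big).$$ Then $$\mathsf{R}_{\mathsf{dl},1}^{2\rightarrow1}=\log_2\!\Big(1+\overline{\gamma}_{\mathsf{dl},1}\mathsf{g}_1\Big(1-\tfrac{\overline{\gamma}_{\mathsf{dl},2}\mathsf{g}_2|\rho|^2}{1+\overline{\gamma}_{\mathsf{dl},2}\mathsf{g}_2}\Big)\Big),\qquad \mathsf{R}_{\mathsf{dl},2}^{2\rightarrow1}=\log_2(1+\overline{\gamma}_{\mathsf{dl},2}\mathsf{g}_2),$$ so that $\mathsf{R}_{\mathsf{dl},1}^{2\rightarrow1}+\mathsf{R}_{\mathsf{dl},2}^{2\rightarrow1}=\log_2(1+\overline{\gamma}_{\mathsf{dl},1}\mathsf{g}_1+\overline{\gamma}_{\mathsf{dl},2}\mathsf{g}_2+\overline{\gamma}_{\mathsf{dl},1}\overline{\gamma}_{\mathsf{dl},2}\mathsf{g}_1\mathsf{g}_2(1-|\rho|^2))$,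 and moreover $$\sum_{k=1}^2\int_{\mathcal{A}}|\mathsf{J}_{\mathsf{dl},k}(\mathbf{r})|^2\mathrm{d}\mathbf{r}=\mathsf{P}_1+\mathsf{P}_2=\mathsf{P}.$$
   Context: Integrals without variable are over $\mathbf{r}\in\mathcal{A}$ with respect to Lebesgue measure. In the paper $\mathcal{A}$ is the base-station continuous aperture, $\mathsf{G}_k(\mathbf{r})=\frac{e^{-\mathrm{j}k_0\|\mathbf{r}-\mathbf{s}_k\|}}{\sqrt{4\pi}\|\mathbf{r}-\mathbf{s}_k\|}\sqrt{\frac{|\mathbf{e}^{\mathsf{T}}(\mathbf{s}_k-\mathbf{r})|}{\|\mathbf{r}-\mathbf{s}_k\|}}$ (user locations $\mathbf{s}_k\notin\overline{\mathcal{A}}$, aperture normal $\mathbf{e}$), $A_{\mathsf{u},k}$ is user $k$'s aperture size, $\sigma_k^2$ its noise intensity, and $(\mathsf{P}_1,\mathsf{P}_2)$ is a power allocation of the dual uplink channel (the downlink sum-rate capacity is attained when it is the optimal dual allocation). *)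

(* Defs.v *)
From HB Require Import structures.
From mathcomp Require Import all_boot all_order all_algebra.
From mathcomp Require Import all_classical all_reals all_analysis.
From mathcomp Require Import complex.
Set Implicit Arguments. Unset Strict Implicit. Unset Printing Implicit Defensive.
Import Order.TTheory GRing.Theory Num.Theory.
Local Open Scope ring_scope.
Local Open Scope complex_scope.

Section Defs.
Variable R : realType.

Definition R3 : measurableType _ :=
  ((measurableTypeR R * measurableTypeR R) * measurableTypeR R)%type.

Definition leb3 : set R3 -> \bar R := (((@lebesgue_measure R) \x (@lebesgue_measure R)) \x (@lebesgue_measure R))%E.

Definition csq (z : R[i]) : R := (complex.Re z) ^+ 2 + (complex.Im z) ^+ 2.

Definition cint (A : set R3) (f : R3 -> R[i]) : R[i] :=
  (Rintegral leb3 A (fun x => complex.Re (f x)))%:C + 'i * (Rintegral leb3 A (fun x => complex.Im (f x)))%:C.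

Definition int_sq (A : set R3) (f : R3 -> R[i]) : R := Rintegral leb3 A (fun x => csq (f x)).

Definition L2 (A : set R3) (f : R3 -> R[i]) : Prop :=
  measurable_fun A (fun x => complex.Re (f x)) /\ measurable_fun A (fun x => complex.Im (f x)) /\
  leb3.-integrable A (fun x => (csq (f x))%:E).

Definition log2 (x : R) : R := ln x / ln 2.

End Defs.

(* Main.v *)
Require Import Defs.
From HB Require Import structures.
From mathcomp Require Import all_boot all_order all_algebra.
From mathcomp Require Import all_classical all_reals all_analysis.
From mathcomp Require Import measurable_realfun.
From mathcomp Require Import complex.
From mathcomp Require Import ring lra.
Import Order.TTheory GRing.Theory Num.Theory.
Local Open Scope ring_scope.
Local Open Scope complex_scope.
Set Implicit Arguments. Unset Strict Implicit.
Notation CRe := complex.Re.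
Notation CIm := complex.Im.

Section Helpers.
Variable R : realType.
Implicit Types (k z : R[i]).

Lemma ReM k z : CRe (k * z) = CRe k * CRe z - CIm k * CIm z.
Proof. by case: k => a b; case: z => c d. Qed.
Lemma ImM k z : CIm (k * z) = CRe k * CIm z + CIm k * CRe z.
Proof. by case: k => a b; case: z => c d. Qed.
Lemma ReD k z : CRe (k + z) = CRe k + CRe z.
Proof. by case: k => a b; case: z => c d. Qed.
Lemma ImD k z : CIm (k + z) = CIm k + CIm z.
Proof. by case: k => a b; case: z => c d. Qed.
Lemma ReJ z : CRe ((conjc z)) = CRe z. Proof. by case: z. Qed.
Lemma ImJ z : CIm ((conjc z)) = - CIm z. Proof. by case: z. Qed.
Lemma csqM k z : csq (k * z) = csq k * csq z.
Proof. by case: k => a b; case: z => c d; rewrite /csq /=; ring. Qed.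
Lemma csqJ z : csq ((conjc z)) = csq z.
Proof. by case: z => a b; rewrite /csq /=; ring. Qed.
Lemma csqC (r : R) : csq r%:C = r ^+ 2.
Proof. by rewrite /csq /=; ring. Qed.
Lemma mulJ z : z * (conjc z) = (csq z)%:C.
Proof. case: z => a b; apply/eqP; rewrite eq_complex /csq /=; apply/andP; split; apply/eqP; ring. Qed.
Lemma conjC_real (r : R) : (conjc (r%:C)) = r%:C.
Proof. by rewrite /= oppr0. Qed.
Lemma compl_lin (a b X Y : R) :
  (a * X - b * Y)%:C + 'i * (a * Y + b * X)%:C = (a +i* b) * (X%:C + 'i * Y%:C).
Proof. apply/eqP; rewrite eq_complex /=; apply/andP; split; apply/eqP; ring. Qed.
Lemma conj_lin (X Y : R) : (conjc (X%:C + 'i * Y%:C)) = X%:C + 'i * (- Y)%:C.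
Proof. apply/eqP; rewrite eq_complex /=; apply/andP; split; apply/eqP; ring. Qed.

Lemma c_conj_prod (a b k : R) : (conjc (a%:C * ('i * k%:C))) * (b%:C * ('i * k%:C)) = (a * b * k ^+ 2)%:C.
Proof. apply/eqP; rewrite eq_complex /=; apply/andP; split; apply/eqP; ring. Qed.
Lemma csqiC (k : R) : csq ('i * k%:C) = k ^+ 2.
Proof. rewrite /csq /=; ring. Qed.
Lemma csq_divC z (r : R) : csq (z / r%:C) = csq z / r ^+ 2.
Proof. by rewrite -fmorphV csqM csqC exprVn. Qed.
Lemma sqrt_alg (Au s k0 eta : R) : 0 < Au -> 0 < s ->
  (Num.sqrt Au / s) ^+ 2 * (k0 * eta / Num.sqrt (4 * pi)) ^+ 2 = Au * k0 ^+ 2 * eta ^+ 2 / (4 * pi * s ^+ 2).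
Proof.
move=> hA hs.
have hp : 0 < 4 * pi :> R by apply: mulr_gt0 => //; exact: pi_gt0.
have e1 := sqr_sqrtr (ltW hA); have e2 := sqr_sqrtr (ltW hp).
set sA := Num.sqrt Au in e1 *; set sP := Num.sqrt (4 * pi) in e2 *.
have sP0 : sP != 0 by rewrite sqrtr_eq0 -ltNge.
have s0 : s != 0 by rewrite gt_eqF.
rewrite -e1 -e2; field; rewrite sP0 s0 //.
Qed.

Lemma numconjE z : Num.conj z = conjc z. Proof. by []. Qed.
Lemma cjD k z : (conjc (k + z)) = (conjc k) + (conjc z). Proof. exact: rmorphD. Qed.
Lemma cjB k z : (conjc (k - z)) = (conjc k) - (conjc z). Proof. exact: rmorphB. Qed.
Lemma cjN z : (conjc (- z)) = - (conjc z). Proof. exact: rmorphN. Qed.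
Lemma cjM k z : (conjc (k * z)) = (conjc k) * (conjc z). Proof. exact: rmorphM. Qed.
Lemma cjK z : (conjc (conjc z)) = z. Proof. exact: conjcK. Qed.
Lemma rcD (a b : R) : (a + b)%:C = a%:C + b%:C :> R[i]. Proof. exact: rmorphD. Qed.
Lemma rcB (a b : R) : (a - b)%:C = a%:C - b%:C :> R[i]. Proof. exact: rmorphB. Qed.
Lemma rcN (a : R) : (- a)%:C = - a%:C :> R[i]. Proof. exact: rmorphN. Qed.
Lemma rcM (a b : R) : (a * b)%:C = a%:C * b%:C :> R[i]. Proof. exact: rmorphM. Qed.
Lemma rcV (a : R) : (a^-1)%:C = (a%:C)^-1 :> R[i]. Proof. exact: fmorphV. Qed.
Lemma rcX (a : R) n : (a ^+ n)%:C = (a%:C) ^+ n :> R[i]. Proof. exact: rmorphXn. Qed.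
Lemma rc1 : (1 : R)%:C = 1 :> R[i]. Proof. exact: rmorph1. Qed.

Variable A : set (R3 R).
Hypothesis mA : measurable A.
Local Notation mu := (@leb3 R).

Definition RI (f : R3 R -> R) := mu.-integrable A (EFin \o f).
Definition CI (f : R3 R -> R[i]) := RI (fun x => CRe (f x)) /\ RI (fun x => CIm (f x)).

Lemma RI_ext f g : RI f -> (forall x, f x = g x) -> RI g.
Proof. by move=> + e; have -> : g = f by apply: funext => x; rewrite e. Qed.
Lemma RI_D f g : RI f -> RI g -> RI (fun x => f x + g x).
Proof.
rewrite /RI => hf hg.
have -> : EFin \o (fun x => f x + g x) = ((EFin \o f) \+ (EFin \o g))%E.
  by apply: funext => x; rewrite /= EFinD.
exact: integrableD.
Qed.
Lemma RI_Z (a : R) f : RI f -> RI (fun x => a * f x).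
Proof.
rewrite /RI => hf.
have -> : EFin \o (fun x => a * f x) = (fun x => a%:E * (EFin \o f) x)%E.
  by apply: funext => x; rewrite /= EFinM.
exact: integrableZl.
Qed.
Lemma RI_B f g : RI f -> RI g -> RI (fun x => f x - g x).
Proof.
move=> hf hg; apply: (RI_ext (RI_D hf (RI_Z (-1) hg))) => x; ring.
Qed.

Local Notation Rint f := (Rintegral mu A f).

Lemma Rint_ext f g : (forall x, f x = g x) -> Rint f = Rint g.
Proof. by move=> e; have -> : g = f by apply: funext => x; rewrite e. Qed.

Lemma CI_ext f g : CI f -> (forall x, f x = g x) -> CI g.
Proof. by move=> + e; have -> : g = f by apply: funext => x; rewrite e. Qed.

Lemma CI_D f g : CI f -> CI g -> CI (fun x => f x + g x).
Proof.
move=> [f1 f2] [g1 g2]; split.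
  by apply: (RI_ext (RI_D f1 g1)) => x; rewrite ReD.
by apply: (RI_ext (RI_D f2 g2)) => x; rewrite ImD.
Qed.

Lemma CI_Z k f : CI f -> CI (fun x => k * f x).
Proof.
move=> [f1 f2]; split.
  by apply: (RI_ext (RI_B (RI_Z (CRe k) f1) (RI_Z (CIm k) f2))) => x; rewrite ReM.
by apply: (RI_ext (RI_D (RI_Z (CRe k) f2) (RI_Z (CIm k) f1))) => x; rewrite ImM.
Qed.

Lemma cint_ext f g : (forall x, f x = g x) -> cint A f = cint A g.
Proof. by move=> e; have -> : g = f by apply: funext => x; rewrite e. Qed.

Lemma cintD f g : CI f -> CI g -> cint A (fun x => f x + g x) = cint A f + cint A g.
Proof.
move=> [f1 f2] [g1 g2]; rewrite /cint.
rewrite (Rint_ext (g := fun x => CRe (f x) + CRe (g x))); last by move=> x; rewrite ReD.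
rewrite (Rint_ext (f := fun x => CIm (f x + g x)) (g := fun x => CIm (f x) + CIm (g x))); last by move=> x; rewrite ImD.
rewrite !RintegralD // !rmorphD /=; ring.
Qed.

Lemma cintZ k f : CI f -> cint A (fun x => k * f x) = k * cint A f.
Proof.
move=> [f1 f2]; rewrite /cint.
rewrite (Rint_ext (g := fun x => CRe k * CRe (f x) - CIm k * CIm (f x))); last by move=> x; rewrite ReM.
rewrite (Rint_ext (f := fun x => CIm (k * f x)) (g := fun x => CRe k * CIm (f x) + CIm k * CRe (f x))); last by move=> x; rewrite ImM.
rewrite RintegralB ?RintegralD ?RintegralZl //; try by apply: RI_Z.
by case: k => a b /=; rewrite compl_lin.
Qed.


Lemma csq_ge0 z : 0 <= csq z.
Proof. by rewrite /csq; apply: addr_ge0; apply: sqr_ge0. Qed.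

Lemma L2Z k f : L2 A f -> L2 A (fun x => k * f x).
Proof.
move=> [mR [mI hi]]; split; [|split].
- have -> : (fun x => CRe (k * f x)) = (fun x => CRe k * CRe (f x)) \- (fun x => CIm k * CIm (f x)).
    by apply: funext => x; rewrite ReM.
  by apply: measurable_funB; apply: measurable_funM => //; exact: measurable_cst.
- have -> : (fun x => CIm (k * f x)) = (fun x => CRe k * CIm (f x)) \+ (fun x => CIm k * CRe (f x)).
    by apply: funext => x; rewrite ImM.
  by apply: measurable_funD; apply: measurable_funM => //; exact: measurable_cst.
- have -> : (fun x => (csq (k * f x))%:E) = (fun x => (csq k)%:E * (csq (f x))%:E)%E.
    by apply: funext => x; rewrite csqM EFinM.
  exact: integrableZl.
Qed.

Lemma L2J f : L2 A f -> L2 A (fun x => (conjc (f x))).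
Proof.
move=> [mR [mI hi]]; split; [|split].
- by have -> : (fun x => CRe ((conjc (f x)))) = (fun x => CRe (f x)) by apply: funext => x; rewrite ReJ.
- have -> : (fun x => CIm ((conjc (f x)))) = \- (fun x => CIm (f x)) by apply: funext => x; rewrite ImJ.
  exact: measurable_funN.
- by have -> : (fun x => (csq ((conjc (f x))))%:E) = (fun x => (csq (f x))%:E) by apply: funext => x; rewrite csqJ.
Qed.

Lemma bound_prod (a b c d : R) : `| a * c + b * d | <= `| (a ^+ 2 + b ^+ 2) + (c ^+ 2 + d ^+ 2) |.
Proof.
rewrite [X in _ <= X]ger0_norm; last by apply: addr_ge0; apply: addr_ge0; apply: sqr_ge0.
have h1 := sqr_ge0 (a + c); have h2 := sqr_ge0 (b + d).
have h3 := sqr_ge0 (a - c); have h4 := sqr_ge0 (b - d).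
have h5 := sqr_ge0 a; have h6 := sqr_ge0 b; have h7 := sqr_ge0 c; have h8 := sqr_ge0 d.
rewrite ler_norml; apply/andP; split; nra.
Qed.

Lemma L2_CI f g : L2 A f -> L2 A g -> CI (fun x => f x * (conjc (g x))).
Proof.
move=> [mRf [mIf hf]] [mRg [mIg hg]].
have hs := integrableD mA hf hg.
split.
- apply: (le_integrable mA _ _ hs).
    apply/measurable_EFinP.
    have -> : (fun x => CRe (f x * (conjc (g x)))) = (fun x => CRe (f x) * CRe (g x)) \+ (fun x => CIm (f x) * CIm (g x)).
      by apply: funext => x; rewrite ReM ReJ ImJ /=; ring.
    by apply: measurable_funD; apply: measurable_funM.
  move=> x _; rewrite /= lee_fin ReM ReJ ImJ /csq.
  have -> : CRe (f x) * CRe (g x) - CIm (f x) * - CIm (g x) = CRe (f x) * CRe (g x) + CIm (f x) * CIm (g x) by ring.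
  exact: bound_prod.
- apply: (le_integrable mA _ _ hs).
    apply/measurable_EFinP.
    have -> : (fun x => CIm (f x * (conjc (g x)))) = (fun x => CIm (f x) * CRe (g x)) \- (fun x => CRe (f x) * CIm (g x)).
      by apply: funext => x; rewrite ImM ReJ ImJ /=; ring.
    by apply: measurable_funB; apply: measurable_funM.
  move=> x _; rewrite /= lee_fin ImM ReJ ImJ /csq.
  have -> : CRe (f x) * - CIm (g x) + CIm (f x) * CRe (g x) = CIm (f x) * CRe (g x) + (- CRe (f x)) * CIm (g x) by ring.
  have -> : CRe (f x) ^+ 2 + CIm (f x) ^+ 2 = CIm (f x) ^+ 2 + (- CRe (f x)) ^+ 2 by ring.
  exact: bound_prod.
Qed.

Definition Nip f g := cint A (fun x => f x * (conjc (g x))).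

Lemma sesq (f g : R3 R -> R[i]) (p q p' q' : R[i]) : L2 A f -> L2 A g ->
  cint A (fun x => (p * f x + q * g x) * (conjc (p' * f x + q' * g x))) =
  p * (conjc p') * Nip f f + p * (conjc q') * Nip f g + q * (conjc p') * Nip g f + q * (conjc q') * Nip g g.
Proof.
move=> hf hg.
rewrite (cint_ext (g := fun x => ((p * (conjc p')) * (f x * (conjc (f x))) + (p * (conjc q')) * (f x * (conjc (g x))))
   + (q * (conjc p')) * (g x * (conjc (f x))) + (q * (conjc q')) * (g x * (conjc (g x))))); last first.
  by move=> x; rewrite rmorphD !rmorphM; ring.
have Iff := L2_CI hf hf; have Ifg := L2_CI hf hg; have Igf := L2_CI hg hf; have Igg := L2_CI hg hg.
rewrite cintD; [|apply: CI_D; [apply: CI_D|]; exact: CI_Z| exact: CI_Z].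
rewrite cintD; [|apply: CI_D; exact: CI_Z| exact: CI_Z].
rewrite cintD; [|exact: CI_Z| exact: CI_Z].
by rewrite !cintZ.
Qed.

Lemma Nff f : Nip f f = (int_sq A f)%:C.
Proof.
rewrite /Nip /cint /int_sq.
rewrite (Rint_ext (g := fun x => csq (f x))); last by move=> x; rewrite mulJ.
rewrite (Rint_ext (f := fun x => CIm (f x * (conjc (f x)))) (g := fun _ => 0)); last by move=> x; rewrite mulJ.
by rewrite Rintegral_cst // mul0r mulr0 addr0.
Qed.

Lemma Ngf f g : L2 A f -> L2 A g -> Nip g f = (conjc (Nip f g)).
Proof.
move=> hf hg; have [h1 h2] := L2_CI hf hg.
rewrite /Nip /cint.
rewrite (Rint_ext (g := fun x => CRe (f x * (conjc (g x))))); last first.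
  by move=> x; rewrite !ReM !ReJ !ImJ; ring.
rewrite (Rint_ext (f := fun x => CIm (g x * (conjc (f x)))) (g := fun x => -1 * CIm (f x * (conjc (g x))))); last first.
  by move=> x; rewrite !ImM !ReJ !ImJ; ring.
by rewrite RintegralZl // conj_lin mulN1r.
Qed.

Lemma int_sqZ k f : L2 A f -> int_sq A (fun x => k * f x) = csq k * int_sq A f.
Proof.
move=> [_ [_ hi]]; rewrite /int_sq.
rewrite (Rint_ext (g := fun x => csq k * csq (f x))); last by move=> x; rewrite csqM.
by rewrite RintegralZl.
Qed.

Lemma int_sqJ f : int_sq A (fun x => (conjc (f x))) = int_sq A f.
Proof. by rewrite /int_sq; apply: Rint_ext => x; rewrite csqJ. Qed.

Lemma int_sq_ge0 f : 0 <= int_sq A f.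
Proof. by apply: Rintegral_ge0 => x _; exact: csq_ge0. Qed.

End Helpers.

Unset Implicit Arguments.

Theorem theorem3 (R : realType) (A : set (R3 R)) (k0 eta : R)
  (G1 G2 : R3 R -> R[i]) (Au1 Au2 s1 s2 P P1 P2 : R) :
  measurable A -> (0 < leb3 A)%E -> (leb3 A < +oo)%E ->
  0 < k0 -> 0 < eta ->
  L2 A G1 -> L2 A G2 -> 0 < int_sq A G1 -> 0 < int_sq A G2 ->
  0 < Au1 -> 0 < Au2 -> 0 < s1 -> 0 < s2 ->
  0 < P -> 0 <= P1 -> 0 <= P2 -> P1 + P2 = P ->
  let g1 := int_sq A G1 in
  let g2 := int_sq A G2 in
  let H1 := fun x => ('i * (k0 * eta / Num.sqrt (4 * pi))%:C) * G1 x in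
  let H2 := fun x => ('i * (k0 * eta / Num.sqrt (4 * pi))%:C) * G2 x in
  let Hh1 := fun x => (Num.sqrt Au1 / s1)%:C * H1 x in
  let Hh2 := fun x => (Num.sqrt Au2 / s2)%:C * H2 x in
  let rho := cint A (fun x => (G1 x)^* * G2 x) / (Num.sqrt (g1 * g2))%:C in
  let gb1 := Au1 * k0 ^+ 2 * eta ^+ 2 / (4 * pi * s1 ^+ 2) * P1 in
  let gb2 := Au2 * k0 ^+ 2 * eta ^+ 2 / (4 * pi * s2 ^+ 2) * P2 in
  let a12 := cint A (fun x => (Hh1 x)^* * Hh2 x) in
  let n1 := int_sq A Hh1 in
  let n2 := int_sq A Hh2 in
  let J1 := fun x => (Num.sqrt P1)%:C *
      (((Hh1 x)^* - (P2%:C * a12 / (1 + P2 * n2)%:C) * (Hh2 x)^*)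
       / (Num.sqrt (n1 - P2 * csq a12 / (1 + P2 * n2)))%:C) in
  let J2 := fun x => (Num.sqrt P2)%:C *
      (((Hh2 x)^* * (Num.sqrt (1 + csq (cint A (fun y => Hh2 y * J1 y))))%:C)
       / (Num.sqrt n2)%:C) in
  let Rdl1 := log2 (1 + csq (cint A (fun x => Hh1 x * J1 x))) in
  let Rdl2 := log2 (1 + csq (cint A (fun x => Hh2 x * J2 x))
                       / (1 + csq (cint A (fun x => Hh2 x * J1 x)))) in
  [/\ Rdl1 = log2 (1 + gb1 * g1 * (1 - gb2 * g2 * csq rho / (1 + gb2 * g2))),
      Rdl2 = log2 (1 + gb2 * g2),
      Rdl1 + Rdl2 = log2 (1 + gb1 * g1 + gb2 * g2 + gb1 * gb2 * g1 * g2 * (1 - csq rho)),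
      int_sq A J1 + int_sq A J2 = P1 + P2 &
      P1 + P2 = P].
Proof.
move=> mA _ _ k0p etap hG1 hG2 g1p g2p Au1p Au2p s1p s2p Pp P1p P2p hP.
move=> g1 g2 H1 H2 Hh1 Hh2 rho gb1 gb2 a12 n1 n2 J1 J2 Rdl1 Rdl2.
set kap := k0 * eta / Num.sqrt (4 * pi).
set al1 := Num.sqrt Au1 / s1.
set al2 := Num.sqrt Au2 / s2.
set be1 := Au1 * k0 ^+ 2 * eta ^+ 2 / (4 * pi * s1 ^+ 2).
set be2 := Au2 * k0 ^+ 2 * eta ^+ 2 / (4 * pi * s2 ^+ 2).
have hb1 : al1 ^+ 2 * kap ^+ 2 = be1 by apply: sqrt_alg.
have hb2 : al2 ^+ 2 * kap ^+ 2 = be2 by apply: sqrt_alg.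
have hLH1 : L2 A H1 by apply: L2Z.
have hLH2 : L2 A H2 by apply: L2Z.
have hL1 : L2 A Hh1 by apply: L2Z.
have hL2 : L2 A Hh2 by apply: L2Z.
have hn1 : n1 = be1 * g1.
  by rewrite /n1 /Hh1 int_sqZ // /H1 int_sqZ // csqC csqiC -hb1 mulrA.
have hn2 : n2 = be2 * g2.
  by rewrite /n2 /Hh2 int_sqZ // /H2 int_sqZ // csqC csqiC -hb2 mulrA.
set rG := Nip A G2 G1.
have ha12 : a12 = (al1 * al2 * kap ^+ 2)%:C * rG.
  rewrite /a12 /rG /Nip -(cintZ mA); last exact: L2_CI.
  apply: cint_ext => x; rewrite /Hh1 /Hh2 /H1 /H2 -c_conj_prod !rmorphM; ring.
have hrho : csq rho = csq rG / (g1 * g2).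
  rewrite /rho csq_divC sqr_sqrtr; last by apply: mulr_ge0; apply: ltW.
  congr (csq _ / _); apply: cint_ext => x; ring.
have hca : csq a12 = n1 * n2 * csq rho.
  rewrite hrho ha12 csqM csqC hn1 hn2 -hb1 -hb2.
  have g10 : g1 != 0 by rewrite gt_eqF.
  have g20 : g2 != 0 by rewrite gt_eqF.
  by field; rewrite g10 g20.
have g10 : 0 < g1 by [].
have g20 : 0 < g2 by [].
have be1p : 0 < be1.
  rewrite /be1; apply: divr_gt0; first by rewrite !mulr_gt0 // exprn_gt0.
  by rewrite !mulr_gt0 // ?exprn_gt0 // pi_gt0.
have be2p : 0 < be2.
  rewrite /be2; apply: divr_gt0; first by rewrite !mulr_gt0 // exprn_gt0.
  by rewrite !mulr_gt0 // ?exprn_gt0 // pi_gt0.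
have n1p : 0 < n1 by rewrite hn1 mulr_gt0.
have n2p : 0 < n2 by rewrite hn2 mulr_gt0.
have hN11 : Nip A Hh1 Hh1 = n1%:C by rewrite Nff.
have hN22 : Nip A Hh2 Hh2 = n2%:C by rewrite Nff.
have hN21 : Nip A Hh2 Hh1 = a12 by apply: cint_ext => x; rewrite numconjE mulrC.
have hN12 : Nip A Hh1 Hh2 = conjc a12 by rewrite (Ngf mA hL2 hL1) hN21.
clearbody a12.
have hcs : csq a12 <= n1 * n2.
  pose w0 := fun x => n2%:C * Hh1 x + (- conjc a12) * Hh2 x.
  move: (int_sq_ge0 A w0).
  have -> : int_sq A w0 = CRe (Nip A w0 w0) by rewrite Nff.
  have -> : Nip A w0 w0 = (n2 * (n1 * n2 - csq a12))%:C.
    rewrite /Nip /w0 /= (sesq mA) // hN11 hN12 hN21 hN22.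
    rewrite !cjN !cjK !conjC_real !rcM rcB rcM -mulJ; ring.
  move=> /= h1.
  have : 0 <= n1 * n2 - csq a12 by rewrite -(pmulr_rge0 _ n2p).
  by rewrite subr_ge0.
set u := 1 + P2 * n2.
have up : 0 < u by rewrite /u ltr_pwDl // mulr_ge0 // ltW.
set D := n1 - P2 * csq a12 / u.
have Dp : 0 < D.
  rewrite /D subr_gt0 ltr_pdivrMr // /u.
  have h1 : 0 <= P2 * (n1 * n2 - csq a12) by apply: mulr_ge0 => //; rewrite subr_ge0.
  nra.
set sD := Num.sqrt D.
have hsD : sD ^+ 2 = D by rewrite sqr_sqrtr // ltW.
have sD0 : sD != 0 by rewrite sqrtr_eq0 -ltNge.
set t := P2 / u.
set sg := Num.sqrt P1 / sD.
have hJ1 : forall x, J1 x = conjc (sg%:C * Hh1 x + (- (sg%:C * conjc (t%:C * a12))) * Hh2 x).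
  move=> x; rewrite /J1 -/u -/D -/sD !numconjE.
  rewrite !(cjD, cjN, cjM, cjK, conjC_real) /sg /t !(rcM, rcV); ring.
set X := csq (cint A (fun y => Hh2 y * J1 y)).
set sY := Num.sqrt (1 + X).
set sn2 := Num.sqrt n2.
set tau := Num.sqrt P2 * sY / sn2.
have hJ2 : forall x, J2 x = conjc (tau%:C * Hh2 x).
  move=> x; rewrite /J2 -/X -/sY -/sn2 !numconjE.
  rewrite !(cjM, conjC_real) /tau !(rcM, rcV); ring.
have esg : sg = Num.sqrt P1 / sD by [].
have et : t = P2 / u by [].
have eD : D = n1 - P2 * csq a12 / u by [].
have eu : u = 1 + P2 * n2 by [].
have etau : tau = Num.sqrt P2 * sY / sn2 by [].
have hsY : sY ^+ 2 = 1 + X by rewrite sqr_sqrtr // addr_ge0 // csq_ge0.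
have hsn2 : sn2 ^+ 2 = n2 by rewrite sqr_sqrtr // ltW.
have sn20 : sn2 != 0 by rewrite sqrtr_eq0 -ltNge.
have hsP1 : Num.sqrt P1 ^+ 2 = P1 by rewrite sqr_sqrtr.
have hsP2 : Num.sqrt P2 ^+ 2 = P2 by rewrite sqr_sqrtr.
have Ec := mulJ a12.
have hc0 := csq_ge0 a12.
set c := csq a12 in Ec hc0 hca hcs eD *.
have hcE : csq a12 = c by [].
clearbody J1 J2 sg t tau sY sn2 sD D u c.
have hI1 : cint A (fun x => Hh1 x * J1 x) = (sg * (n1 - t * c))%:C.
  rewrite (cint_ext A (g := fun x => (1 * Hh1 x + 0 * Hh2 x) * conjc (sg%:C * Hh1 x + (- (sg%:C * conjc (t%:C * a12))) * Hh2 x))); last first.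
    by move=> x; rewrite hJ1 mul1r mul0r addr0.
  rewrite (sesq mA) // hN11 hN12 hN21 hN22.
  rewrite !(cjD, cjN, cjM, cjK, conjC_real) !(rcM, rcB) -Ec; ring.
have hI21 : cint A (fun x => Hh2 x * J1 x) = (sg * (1 - t * n2))%:C * a12.
  rewrite (cint_ext A (g := fun x => (0 * Hh1 x + 1 * Hh2 x) * conjc (sg%:C * Hh1 x + (- (sg%:C * conjc (t%:C * a12))) * Hh2 x))); last first.
    by move=> x; rewrite hJ1 mul1r mul0r add0r.
  rewrite (sesq mA) // hN11 hN12 hN21 hN22.
  rewrite !(cjD, cjN, cjM, cjK, conjC_real) !(rcM, rcB, rc1); ring.
have hX : X = (sg * (1 - t * n2)) ^+ 2 * c by rewrite /X hI21 csqM csqC hcE.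
have hI22 : cint A (fun x => Hh2 x * J2 x) = (tau * n2)%:C.
  rewrite (cint_ext A (g := fun x => (0 * Hh1 x + 1 * Hh2 x) * conjc (0 * Hh1 x + tau%:C * Hh2 x))); last first.
    by move=> x; rewrite hJ2 mul1r mul0r !add0r.
  rewrite (sesq mA) // hN11 hN12 hN21 hN22.
  rewrite !(cjM, conjC_real) !rcM; ring.
have iJ1 : int_sq A J1 = sg ^+ 2 * (n1 - 2 * t * c + t ^+ 2 * c * n2).
  have -> : J1 = fun x => conjc (sg%:C * Hh1 x + (- (sg%:C * conjc (t%:C * a12))) * Hh2 x).
    by apply: funext => x; exact: hJ1.
  rewrite int_sqJ.
  set w := fun x => _.
  have -> : int_sq A w = CRe (Nip A w w) by rewrite Nff.
  have -> : Nip A w w = (sg ^+ 2 * (n1 - 2 * t * c + t ^+ 2 * c * n2))%:C.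
    rewrite /Nip /w /= (sesq mA) // hN11 hN12 hN21 hN22.
    rewrite !(cjD, cjN, cjM, cjK, conjC_real) !(rcM, rcB, rcD, rcX, rc1) -Ec; ring.
  by [].
have iJ2 : int_sq A J2 = tau ^+ 2 * n2.
  have -> : J2 = fun x => conjc (tau%:C * Hh2 x) by apply: funext => x; exact: hJ2.
  by rewrite int_sqJ int_sqZ // csqC.
have hsg2 : sg ^+ 2 = P1 / D by rewrite esg expr_div_n hsP1 hsD.
have htau2 : tau ^+ 2 = P2 * (1 + X) / n2 by rewrite etau !expr_div_n exprMn hsP2 hsY hsn2.
have D0 : D != 0 by rewrite gt_eqF.
have u0 : u != 0 by rewrite gt_eqF.
have n20 : n2 != 0 by rewrite gt_eqF.
have X1 : 0 < 1 + X by rewrite ltr_pwDl // /X csq_ge0.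
have X10 : 1 + X != 0 by rewrite gt_eqF.
have g10' : g1 != 0 by rewrite gt_eqF.
have g20' : g2 != 0 by rewrite gt_eqF.
have hgb1 : gb1 = be1 * P1 by [].
have hgb2 : gb2 = be2 * P2 by [].
have eR1 : gb1 * g1 * (1 - gb2 * g2 * csq rho / (1 + gb2 * g2)) = P1 * D.
  have hc' : csq rho = c / (n1 * n2) by rewrite hca; field; rewrite !gt_eqF.
  rewrite hgb1 hgb2 hc' eD eu hn1 hn2.
  have e1 : 1 + be2 * P2 * g2 != 0.
    have h : 0 <= be2 * P2 * g2.
      by apply: mulr_ge0; [apply: mulr_ge0 => //; exact: ltW | exact: ltW].
    rewrite gt_eqF //; lra.
  have e2 : 1 + P2 * (be2 * g2) != 0 by rewrite mulrCA mulrA.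
  by field; rewrite e2 !gt_eqF.
have eL1 : csq (cint A (fun x => Hh1 x * J1 x)) = P1 * D.
  rewrite hI1 csqC exprMn hsg2.
  have -> : n1 - t * c = D by rewrite eD et mulrAC.
  by field.
have eR2 : csq (cint A (fun x => Hh2 x * J2 x)) / (1 + csq (cint A (fun x => Hh2 x * J1 x))) = gb2 * g2.
  rewrite -/X hI22 csqC exprMn htau2 hgb2 hn2; field.
  by rewrite X10 !gt_eqF.
have h1 : Rdl1 = log2 (1 + gb1 * g1 * (1 - gb2 * g2 * csq rho / (1 + gb2 * g2))).
  by rewrite /Rdl1 eL1 eR1.
have h2 : Rdl2 = log2 (1 + gb2 * g2) by rewrite /Rdl2 eR2.
have p1 : 0 < 1 + P1 * D.
  have : 0 <= P1 * D by rewrite mulr_ge0 // ltW.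
  lra.
have p2 : 0 < 1 + gb2 * g2.
  have : 0 <= gb2 * g2.
    by rewrite hgb2; apply: mulr_ge0; [apply: mulr_ge0 => //; exact: ltW | exact: ltW].
  lra.
split => //.
- rewrite h1 h2 eR1 /log2 -mulrDl -lnM; [| by rewrite posrE | by rewrite posrE].
  congr (ln _ / _).
  rewrite -eR1; field.
  by rewrite gt_eqF.
- have key : n1 - 2 * t * c + t ^+ 2 * c * n2 + P2 * (1 - t * n2) ^+ 2 * c = D.
    by rewrite eD et eu; field; rewrite -eu.
  rewrite iJ1 iJ2 htau2 hX exprMn hsg2.
  have -> : P1 / D * (n1 - 2 * t * c + t ^+ 2 * c * n2) +
     P2 * (1 + P1 / D * (1 - t * n2) ^+ 2 * c) / n2 * n2 =
     P1 / D * (n1 - 2 * t * c + t ^+ 2 * c * n2 + P2 * (1 - t * n2) ^+ 2 * c) + P2.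
    by field; rewrite ?D0 ?n20.
  by rewrite key; field; rewrite ?D0.
Qed.
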